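(* For the 2-description problem ($L=2$), $\mathcal{RD}_{\text{ZB}}=\mathcal{RD}_{\text{VKG}}$.
   Context: Let $\mathcal{X}$ and $\hat{\mathcal{X}}$ be finite sets, $p_X$ a distribution on $\mathcal{X}$, $X$ a random variable with distribution $p_X$, and $d:\mathcal{X}\times\hat{\mathcal{X}}\to[0,\infty)$ a distortion measure. All auxiliary random variables take values in finite sets. The ZB region $\mathcal{RD}_{\text{ZB}}$ is the set of quintuples $(R_1,R_2,D_{\{1\}},D_{\{2\}},D_{\{1,2\}})$ for which there exist auxiliary random variables $X_{\emptyset},X_{\{1\}},X_{\{2\}}$, jointly distributed with $X$, and functions $\phi_{\{1\}},\phi_{\{2\}},\phi_{\{1,2\}}$ with values in $\hat{\mathcal{X}}$ such that $R_k\ge I(X;X_{\emptyset},X_{\{k\}})$ for $k\in\{1,2\}$; $R_1+R_2\ge 2I(X;X_{\emptyset})+I(X;X_{\{1\}},X_{\{2\}}|X_{\emptyset})+I(X_{\{1\}};X_{\{2\}}|X_{\emptyset})$; $D_{\{k\}}\ge\mathbb{E}[d(X,\phi_{\{k\}}(X_{\emptyset},X_{\{k\}}))]$ for $k\in\{1,2\}$; $D_{\{1,2\}}\ge\mathbb{E}[d(X,\phi_{\{1,2\}}(X_{\emptyset},X_{\{1\}},X_{\{2\}}))]$. The VKG region for $L=2$, $\mathcal{RD}_{\text{VKG}}$, is the set of quintuples $(R_1,R_2,D_{\{1\}},D_{\{2\}},D_{\{1,2\}})$ for which there exist auxiliary random variables $X_{\emptyset},X_{\{1\}},X_{\{2\}},X_{\{1,2\}}$,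 jointly distributed with $X$, and functions $\phi_{\mathcal{K}}$ with values in $\hat{\mathcal{X}}$, such that $R_{\mathcal{K}}\ge\psi(\mathcal{K})$ and $D_{\mathcal{K}}\ge\mathbb{E}[d(X,\phi_{\mathcal{K}}(X_{(2^{\mathcal{K}})}))]$ for all nonempty $\mathcal{K}\subseteq\{1,2\}$, where $R_{\mathcal{K}}=\sum_{k\in\mathcal{K}}R_k$, $X_{(2^{\mathcal{K}})}=\{X_{\mathcal{A}}:\mathcal{A}\subseteq\mathcal{K}\}$, and $\psi(\mathcal{K})=(|\mathcal{K}|-1)I(X;X_{\emptyset})-H(X_{(2^{\mathcal{K}})}|X)+\sum_{\mathcal{A}\subseteq\mathcal{K}}H(X_{\mathcal{A}}|X_{(2^{\mathcal{A}}-\{\mathcal{A}\})})$, with conditioning on $X_{(\emptyset)}$ meaning no conditioning. *)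

(* Defs.v *)
From HB Require Import structures.
From mathcomp Require Import all_boot all_order all_algebra.
From mathcomp Require Import reals exp.
Set Implicit Arguments. Unset Strict Implicit. Unset Printing Implicit Defensive.
Import Order.TTheory GRing.Theory Num.Theory.
Local Open Scope ring_scope.

(* Random variables are modelled on a finite probability space (O, p):
   a random variable with values in a finite set T is a map O -> T.
   "Jointly distributed" random variables = maps on a common space. *)

Definition is_pmf (R : realType) (O : finType) (p : O -> R) : Prop :=
  (forall w, 0 <= p w) /\ \sum_(w : O) p w = 1.

Definition law (R : realType) (O T : finType) (p : O -> R) (f : O -> T) (t : T) : R :=
  \sum_(w : O | f w == t) p w.

(* Shannon entropy (natural log; the base is immaterial for the regions). *)
Definition entropy (R : realType) (O T : finType) (p : O -> R) (f : O -> T) : R :=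
  - \sum_(t : T) law p f t * ln (law p f t).

Definition pairRV (O A B : finType) (f : O -> A) (g : O -> B) : O -> A * B :=
  fun w => (f w, g w).

Definition cond_entropy (R : realType) (O A B : finType) (p : O -> R)
  (f : O -> A) (g : O -> B) : R :=
  entropy p (pairRV f g) - entropy p g.

Definition mutinfo (R : realType) (O A B : finType) (p : O -> R)
  (f : O -> A) (g : O -> B) : R :=
  entropy p f + entropy p g - entropy p (pairRV f g).

Definition cmutinfo (R : realType) (O A B C : finType) (p : O -> R)
  (f : O -> A) (g : O -> B) (h : O -> C) : R :=
  entropy p (pairRV f h) + entropy p (pairRV g h)
  - entropy p (pairRV (pairRV f g) h) - entropy p h.

Definition expect (R : realType) (O : finType) (p : O -> R) (F : O -> R) : R :=
  \sum_(w : O) p w * F w.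

Definition RD_ZB (R : realType) (Xs Xh : finType) (pX : Xs -> R)
  (d : Xs -> Xh -> R) (R1 R2 D1 D2 D12 : R) : Prop :=
  exists (O : finType) (p : O -> R) (X : O -> Xs)
         (T0 T1 T2 : finType) (U0 : O -> T0) (U1 : O -> T1) (U2 : O -> T2)
         (phi1 : T0 -> T1 -> Xh) (phi2 : T0 -> T2 -> Xh)
         (phi12 : T0 -> T1 -> T2 -> Xh),
    is_pmf p /\ (forall x, law p X x = pX x) /\
     R1 >= mutinfo p X (pairRV U0 U1) /\
     R2 >= mutinfo p X (pairRV U0 U2) /\
     R1 + R2 >= 2 * mutinfo p X U0 + cmutinfo p X (pairRV U1 U2) U0
                 + cmutinfo p U1 U2 U0 /\
     D1 >= expect p (fun w => d (X w) (phi1 (U0 w) (U1 w))) /\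
     D2 >= expect p (fun w => d (X w) (phi2 (U0 w) (U2 w))) /\
     D12 >= expect p (fun w => d (X w) (phi12 (U0 w) (U1 w) (U2 w))).

(* psi(K) of the VKG region for L = 2, written out for each nonempty
   K of {1,2}; U0 = X_emptyset, U1 = X_{1}, U2 = X_{2}, U12 = X_{1,2}. *)
Definition psi_1 (R : realType) (O Xs T0 T1 : finType) (p : O -> R)
  (X : O -> Xs) (U0 : O -> T0) (U1 : O -> T1) : R :=
  (1 - 1) * mutinfo p X U0 - cond_entropy p (pairRV U0 U1) X
  + (entropy p U0 + cond_entropy p U1 U0).

Definition psi_12 (R : realType) (O Xs T0 T1 T2 T12 : finType) (p : O -> R)
  (X : O -> Xs) (U0 : O -> T0) (U1 : O -> T1) (U2 : O -> T2) (U12 : O -> T12) : R :=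
  (2 - 1) * mutinfo p X U0
  - cond_entropy p (pairRV (pairRV (pairRV U0 U1) U2) U12) X
  + (entropy p U0 + cond_entropy p U1 U0 + cond_entropy p U2 U0
     + cond_entropy p U12 (pairRV (pairRV U0 U1) U2)).

Definition RD_VKG (R : realType) (Xs Xh : finType) (pX : Xs -> R)
  (d : Xs -> Xh -> R) (R1 R2 D1 D2 D12 : R) : Prop :=
  exists (O : finType) (p : O -> R) (X : O -> Xs)
         (T0 T1 T2 T12 : finType) (U0 : O -> T0) (U1 : O -> T1) (U2 : O -> T2)
         (U12 : O -> T12)
         (phi1 : T0 -> T1 -> Xh) (phi2 : T0 -> T2 -> Xh)
         (phi12 : T0 -> T1 -> T2 -> T12 -> Xh),
    is_pmf p /\ (forall x, law p X x = pX x) /\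
     R1 >= psi_1 p X U0 U1 /\
     R2 >= psi_1 p X U0 U2 /\
     R1 + R2 >= psi_12 p X U0 U1 U2 U12 /\
     D1 >= expect p (fun w => d (X w) (phi1 (U0 w) (U1 w))) /\
     D2 >= expect p (fun w => d (X w) (phi2 (U0 w) (U2 w))) /\
     D12 >= expect p (fun w => d (X w) (phi12 (U0 w) (U1 w) (U2 w) (U12 w))).

(* Main.v *)
Set Warnings "-notation-overridden,-ambiguous-paths,-parsing".
Require Import Defs.
From HB Require Import structures.
From mathcomp Require Import all_boot all_order all_algebra.
From mathcomp Require Import reals exp.
From mathcomp Require Import ring lra.
From Stdlib Require Import Btauto.
Import Order.TTheory GRing.Theory Num.Theory.
Local Open Scope ring_scope.
Set Implicit Arguments. Unset Strict Implicit.
Section Ent.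
Variable R : realType.

Lemma entropyE (O T : finType) (p : O -> R) (f : O -> T) :
  entropy p f = - \sum_(w : O) p w * ln (law p f (f w)).
Proof.
rewrite /entropy; congr (- _).
rewrite (partition_big f predT) //=; apply: eq_bigr => t _.
rewrite /law big_distrl /=; apply: eq_bigr => w /eqP -> //.
Qed.

Lemma law_ge0 (O T : finType) (p : O -> R) (f : O -> T) t :
  (forall w, 0 <= p w) -> 0 <= law p f t.
Proof. by move=> p0; apply: sumr_ge0 => w _. Qed.

Lemma law_ge (O T : finType) (p : O -> R) (f : O -> T) w :
  (forall w, 0 <= p w) -> p w <= law p f (f w).
Proof.
move=> p0; rewrite /law (bigD1 w) //= lerDl; apply: sumr_ge0 => *; exact: p0.
Qed.

Lemma law_gt0 (O T : finType) (p : O -> R) (f : O -> T) w :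
  (forall w, 0 <= p w) -> p w != 0 -> 0 < law p f (f w).
Proof.
move=> p0 pw; apply: (lt_le_trans _ (law_ge f w p0)).
by rewrite lt_neqAle eq_sym pw p0.
Qed.

Lemma entropy_equiv (O T1 T2 : finType) (p : O -> R) (f : O -> T1) (g : O -> T2) :
  (forall w w', p w != 0 -> p w' != 0 -> (f w == f w') = (g w == g w')) ->
  entropy p f = entropy p g.
Proof.
move=> H; rewrite !entropyE; congr (- _); apply: eq_bigr => w _.
have [->|pw] := eqVneq (p w) 0; first by rewrite !mul0r.
congr (_ * ln _); rewrite /law.
rewrite (bigID (fun w' => p w' == 0)) [RHS](bigID (fun w' => p w' == 0)) /=.
rewrite big1; last by move=> i /andP[_ /eqP].
rewrite [X in _ = X + _]big1; last by move=> i /andP[_ /eqP].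
rewrite !add0r; apply: eq_bigl => w'.
case: (eqVneq (p w') 0) => pw' /=; first by rewrite !andbF.
by rewrite !andbT (H w' w).
Qed.

Lemma entropy_law (O O' T : finType) (p : O -> R) (p' : O' -> R) (f : O -> T) (f' : O' -> T) :
  (forall t, law p f t = law p' f' t) -> entropy p f = entropy p' f'.
Proof. by move=> H; rewrite /entropy; congr (- _); apply: eq_bigr => t _; rewrite H. Qed.

Lemma law_marg (O A C : finType) (p : O -> R) (f : O -> A) (h : O -> C) c :
  \sum_(a : A) law p (pairRV f h) (a, c) = law p h c.
Proof.
rewrite /law (partition_big f predT) //=; apply: eq_bigr => a _.
by apply: eq_bigl => w; rewrite /pairRV xpair_eqE andbC.
Qed.

Lemma law_sum (O C : finType) (p : O -> R) (h : O -> C) :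
  \sum_(c : C) law p h c = \sum_w p w.
Proof. by rewrite [RHS](partition_big h predT). Qed.

End Ent.
Section CMI.
Variable R : realType.

Lemma ln_le_sub1 (x : R) : 0 < x -> ln x <= x - 1.
Proof.
move=> x0; have := @le_ln1Dx R (x - 1).
have -> : 1 + (x - 1) = x by ring.
apply; lra.
Qed.

Lemma cmutinfo_ge0 (O A B C : finType) (p : O -> R) (f : O -> A) (g : O -> B) (h : O -> C) :
  is_pmf p -> 0 <= cmutinfo p f g h.
Proof.
move=> [p0 p1].
set Lfh := law p (pairRV f h); set Lgh := law p (pairRV g h).
set Lfgh := law p (pairRV (pairRV f g) h); set Lh := law p h.
pose phi (t : (A * B) * C) := Lfh (t.1.1, t.2) * Lgh (t.1.2, t.2) / Lh t.2.
pose psi t := phi t / Lfgh t.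
have E : cmutinfo p f g h = \sum_w p w * (- ln (psi (pairRV (pairRV f g) h w))).
  rewrite /cmutinfo !entropyE.
  have -> : \sum_w p w * - ln (psi (pairRV (pairRV f g) h w)) =
     \sum_w p w * (ln (Lfgh (pairRV (pairRV f g) h w)) + ln (Lh (h w))
                  - ln (Lfh (pairRV f h w)) - ln (Lgh (pairRV g h w))).
    apply: eq_bigr => w _.
    have [->|pw] := eqVneq (p w) 0; first by rewrite !mul0r.
    have h1 := law_gt0 (pairRV f h) p0 pw; have h2 := law_gt0 (pairRV g h) p0 pw.
    have h3 := law_gt0 (pairRV (pairRV f g) h) p0 pw; have h4 := law_gt0 h p0 pw.
    congr (_ * _); rewrite /psi /phi /=.
    rewrite ln_div ?posrE ?divr_gt0 ?mulr_gt0 // ln_div ?posrE ?mulr_gt0 //.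
    by rewrite lnM ?posrE //; rewrite /Lfh /Lgh /Lfgh /Lh /pairRV /=; lra.
  rewrite -!sumrN -!big_split /=; apply: eq_bigr => w _; ring.
rewrite E.
have step : forall w, p w * (1 - psi (pairRV (pairRV f g) h w)) <=
                     p w * - ln (psi (pairRV (pairRV f g) h w)).
  move=> w; have [->|pw] := eqVneq (p w) 0; first by rewrite !mul0r.
  have h1 := law_gt0 (pairRV f h) p0 pw; have h2 := law_gt0 (pairRV g h) p0 pw.
  have h3 := law_gt0 (pairRV (pairRV f g) h) p0 pw; have h4 := law_gt0 h p0 pw.
  apply: ler_wpM2l => //.
  have pos : 0 < psi (pairRV (pairRV f g) h w) by rewrite /psi /phi /= !divr_gt0 ?mulr_gt0.
  have := ln_le_sub1 pos; lra.
apply: le_trans (ler_sum _ (fun w _ => step w)).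
rewrite (eq_bigr (fun w => p w - p w * psi (pairRV (pairRV f g) h w))); last first.
  by move=> w _; rewrite mulrBr mulr1.
rewrite sumrB p1 subr_ge0.
rewrite (partition_big (pairRV (pairRV f g) h) predT) //=.
have -> : \sum_(t : (A * B) * C) \sum_(w | pairRV (pairRV f g) h w == t) p w *
            psi (pairRV (pairRV f g) h w) = \sum_t Lfgh t * psi t.
  apply: eq_bigr => t _; rewrite /Lfgh /law big_distrl /=.
  by apply: eq_bigr => w /eqP ->.
apply: (@le_trans _ _ (\sum_t phi t)).
  apply: ler_sum => t _; rewrite /psi.
  have [->|nz] := eqVneq (Lfgh t) 0; first by rewrite mul0r divr_ge0 ?mulr_ge0 ?law_ge0.
  by rewrite mulrC divfK.
rewrite (eq_bigr (fun t => phi ((t.1.1, t.1.2), t.2))); last by move=> [[a b] c].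
rewrite -(pair_bigA _ (fun ab c => phi ((ab.1, ab.2), c))) /=.
rewrite -(pair_bigA _ (fun a b => \sum_c phi ((a, b), c))) /=.
rewrite (eq_bigr (fun a => \sum_c (Lfh (a, c) * (\sum_b Lgh (b, c))) / Lh c)); last first.
  move=> a _; rewrite exchange_big /=; apply: eq_bigr => c _.
  rewrite /phi /= big_distrr /= big_distrl /=; by apply: eq_bigr => i _.
rewrite exchange_big /=.
rewrite (eq_bigr (fun c => Lh c * Lh c / Lh c)); last first.
  move=> c _; rewrite -big_distrl /= -big_distrl /= /Lfh /Lgh !law_marg //.
apply: (@le_trans _ _ (\sum_c Lh c)).
  apply: ler_sum => c _; have [->|nz] := eqVneq (Lh c) 0; first by rewrite !mul0r.
  by rewrite mulfK.
by rewrite /Lh law_sum p1.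
Qed.
End CMI.

Section Gen.
Variable R : realType.

Lemma test_bt (O A B C : finType) (p : O -> R) (f : O -> A) (g : O -> B) (h : O -> C) :
  entropy p (pairRV (pairRV f g) h) = entropy p (pairRV g (pairRV (fun _ => tt) (pairRV h f))).
Proof.
apply: entropy_equiv => w w' _ _; rewrite /pairRV !xpair_eqE !eqxx; btauto.
Qed.

Lemma entropy_indep (O A B : finType) (p : O -> R) (f : O -> A) (g : O -> B) :
  (forall w, 0 <= p w) ->
  (forall a b, law p (pairRV f g) (a, b) = law p f a * law p g b) ->
  entropy p (pairRV f g) = entropy p f + entropy p g.
Proof.
move=> p0 H; rewrite !entropyE -opprD -big_split /=; congr (- _).
apply: eq_bigr => w _; have [->|pw] := eqVneq (p w) 0; first by rewrite !mul0r addr0.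
rewrite -mulrDr H lnM // posrE; exact: law_gt0.
Qed.

Lemma entropy_const (O T : finType) (p : O -> R) (t : T) :
  \sum_w p w = 1 -> entropy p (fun _ => t) = 0.
Proof.
move=> p1; rewrite entropyE /law (eq_bigr (fun w => p w * ln 1)).
  by rewrite ln1 big1 ?oppr0 // => w _; rewrite mulr0.
by move=> w _; congr (_ * ln _); rewrite (eq_bigl predT) // => w'; rewrite eqxx.
Qed.

Lemma mutinfo_ge0 (O A B : finType) (p : O -> R) (f : O -> A) (g : O -> B) :
  is_pmf p -> 0 <= mutinfo p f g.
Proof.
move=> pp; have := cmutinfo_ge0 f g (fun _ => tt) pp.
have [_ p1] := pp.
rewrite /cmutinfo /mutinfo entropy_const //.
rewrite (@entropy_equiv _ _ _ _ p (pairRV f (fun _ => tt)) f); last first.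
  by move=> w w' _ _; rewrite /pairRV xpair_eqE eqxx andbT.
rewrite (@entropy_equiv _ _ _ _ p (pairRV g (fun _ => tt)) g); last first.
  by move=> w w' _ _; rewrite /pairRV xpair_eqE eqxx andbT.
rewrite (@entropy_equiv _ _ _ _ p (pairRV (pairRV f g) (fun _ => tt)) (pairRV f g)) ?subr0 //.
by move=> w w' _ _; rewrite /pairRV !xpair_eqE eqxx andbT.
Qed.
End Gen.
Section Aux.
Variable R : realType.
Lemma sum_prod (A B : finType) (P : pred A) (G : A * B -> R) :
  \sum_(x | P x.1) G x = \sum_(a | P a) \sum_(b : B) G (a, b).
Proof. by rewrite pair_big /=; apply: eq_big => [[a b]|[a b]] //=; rewrite andbT. Qed.

Lemma law_marg2 (O A C : finType) (p : O -> R) (f : O -> A) (h : O -> C) a :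
  \sum_(c : C) law p (pairRV f h) (a, c) = law p f a.
Proof.
by rewrite /law (partition_big h predT).
Qed.
Lemma sum_prod2 (A B : finType) (P : pred A) (Q : pred B) (G : A * B -> R) :
  \sum_(x | P x.1 && Q x.2) G x = \sum_(a | P a) \sum_(b | Q b) G (a, b).
Proof. by rewrite pair_big /=; apply: eq_big => [[a b]|[a b]]. Qed.
End Aux.

Section FRL.
Variables (R : realType) (O TY TZ : finType) (p : O -> R) (Y : O -> TY) (Z : O -> TZ) (z0 : TZ).
Hypothesis pp : is_pmf p.

Definition kap (y : TY) (z : TZ) : R :=
  if law p Y y == 0 then (z == z0)%:R else law p (pairRV Y Z) (y, z) / law p Y y.
Definition Ker (o : O) (w : {ffun TY -> TZ}) : R :=
  \prod_(y : TY) (if y == Y o then (w y == Z o)%:R else kap y (w y)).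
Definition p1 (x : O * {ffun TY -> TZ}) : R := p x.1 * Ker x.1 x.2.

Let p0 : forall w, 0 <= p w. Proof. by case: pp. Qed.
Let ps : \sum_w p w = 1. Proof. by case: pp. Qed.

Lemma kap_ge0 y z : 0 <= kap y z.
Proof. rewrite /kap; case: ifP => _; first by rewrite ler0n. by rewrite divr_ge0 ?law_ge0. Qed.

Lemma kap_sum y : \sum_z kap y z = 1.
Proof.
have [e|nz] := eqVneq (law p Y y) 0.
  rewrite /kap e eqxx (bigD1 z0) //= eqxx big1 ?addr0 // => z /negbTE -> //.
by rewrite /kap (negbTE nz) -big_distrl /= law_marg2 divff.
Qed.

Lemma Ker_ge0 o w : 0 <= Ker o w.
Proof. apply: prodr_ge0 => y _; case: ifP => _; [exact: ler0n | exact: kap_ge0]. Qed.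

Lemma Ker_sum o : \sum_w Ker o w = 1.
Proof.
rewrite /Ker -(bigA_distr_bigA (fun y z => if y == Y o then (z == Z o)%:R else kap y z)) /=.
apply: big1 => y _; have [e|ne] := eqVneq y (Y o); last first.
  by rewrite (eq_bigr (kap y)) ?kap_sum // => z _; rewrite (negbTE ne).
rewrite (eq_bigr (fun z => (z == Z o)%:R)) //.
by rewrite (bigD1 (Z o)) //= eqxx big1 ?addr0 // => z /negbTE ->.
Qed.

Lemma p1_pmf : is_pmf p1.
Proof.
split; first by move=> [o w]; rewrite /p1 mulr_ge0 ?Ker_ge0.
rewrite (sum_prod predT) /=; rewrite -ps; apply: eq_bigr => o _.
by rewrite /p1 /= -big_distrr /= Ker_sum mulr1.
Qed.

Lemma law_p1_fst (T : finType) (F : O -> T) t :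
  law p1 (fun x => F x.1) t = law p F t.
Proof.
rewrite /law (sum_prod (fun o => F o == t)) /=; apply: eq_bigr => o _.
by rewrite /p1 /= -big_distrr /= Ker_sum mulr1.
Qed.

Lemma expect_p1 (H : O * {ffun TY -> TZ} -> R) (G : O -> R) :
  (forall o w, p o * Ker o w != 0 -> H (o, w) = G o) -> expect p1 H = expect p G.
Proof.
move=> HG; rewrite /expect (sum_prod predT) /=; apply: eq_bigr => o _.
rewrite (eq_bigr (fun w => p o * G o * Ker o w)).
  by rewrite -big_distrr /= Ker_sum mulr1.
move=> w _; rewrite /p1 /=; have [e|nz] := eqVneq (p o * Ker o w) 0.
  by rewrite e mul0r mulrAC e mul0r.
by rewrite HG // mulrAC.
Qed.

Lemma Ker_supp o w : Ker o w != 0 -> w (Y o) = Z o.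
Proof.
move=> nz; apply/eqP; apply: contraNT nz => ne.
by rewrite /Ker (bigD1 (Y o)) //= eqxx (negbTE ne) mul0r.
Qed.

Lemma law_YZ_kap y z : law p (pairRV Y Z) (y, z) = law p Y y * kap y z.
Proof.
have [e|nz] := eqVneq (law p Y y) 0; last by rewrite /kap (negbTE nz) mulrC divfK.
rewrite e mul0r; have := law_marg2 p Y Z y; rewrite e => /psumr_eq0P; apply => //.
by move=> c _; exact: law_ge0.
Qed.

Lemma law_p1_pair (y : TY) (w : {ffun TY -> TZ}) :
  law p1 (pairRV (fun x => Y x.1) snd) (y, w) = law p Y y * \prod_(y' : TY) kap y' (w y').
Proof.
rewrite {1}/law.
have -> : \sum_(x | pairRV (fun x => Y x.1) snd x == (y, w)) p1 x =
   \sum_(o | Y o == y) \sum_(w' | w' == w) p1 (o, w').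
  by rewrite -sum_prod2; apply: eq_bigl => x; rewrite /pairRV xpair_eqE.
rewrite (eq_bigr (fun o => p o * (w y == Z o)%:R * \prod_(y' | y' != y) kap y' (w y'))); last first.
  move=> o /eqP hy; rewrite big_pred1_eq /p1 /= -mulrA; congr (_ * _).
  rewrite /Ker (bigD1 y) //= hy eqxx; congr (_ * _).
  by apply: eq_bigr => y' ne; rewrite (negbTE ne).
rewrite -big_distrl /= [in RHS](bigD1 y) //= mulrA -law_YZ_kap; congr (_ * _).
rewrite /law [RHS](eq_bigl (fun o => (Y o == y) && (Z o == w y))); last first.
  by move=> o; rewrite /pairRV ?xpair_eqE.
rewrite [RHS]big_mkcondr /=; apply: eq_bigr => o _.
rewrite eq_sym.
by case: (Z o == w y); rewrite ?mulr1 ?mulr0.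
Qed.

Lemma law_p1_snd w : law p1 snd w = \prod_y kap y (w y).
Proof.
rewrite -(@law_marg _ _ _ _ p1 (fun x : O * {ffun TY -> TZ} => Y x.1) snd w).
rewrite [LHS](eq_bigr (fun y => law p Y y * \prod_y' kap y' (w y'))); last first.
  by move=> y _; exact: law_p1_pair.
by rewrite -big_distrl /= law_sum ps mul1r.
Qed.

Lemma H_indep :
  entropy p1 (pairRV (fun x => Y x.1) snd) = entropy p1 (fun x => Y x.1) + entropy p1 snd.
Proof.
apply: entropy_indep; first by case: p1_pmf.
by move=> y w; rewrite law_p1_pair law_p1_snd law_p1_fst.
Qed.

Definition CK := - \sum_x p1 x * ln (Ker x.1 x.2).

Lemma H_ker (T : finType) (F : O -> T) :
  (forall o o', F o = F o' -> Y o = Y o' /\ Z o = Z o') ->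
  entropy p1 (pairRV (fun x => F x.1) snd) = entropy p F + CK.
Proof.
move=> hF.
have KE : forall o o' w, F o' = F o -> Ker o' w = Ker o w.
  by move=> o o' w /hF [e1 e2]; rewrite /Ker e1 e2.
have LE : forall o w, law p1 (pairRV (fun x => F x.1) snd) (F o, w) = Ker o w * law p F (F o).
  move=> o w; rewrite /law.
  have -> : \sum_(x | pairRV (fun x => F x.1) snd x == (F o, w)) p1 x =
     \sum_(o' | F o' == F o) \sum_(w' | w' == w) p1 (o', w').
    by rewrite -sum_prod2; apply: eq_bigl => x; rewrite /pairRV xpair_eqE.
  rewrite mulrC big_distrl /=; apply: eq_bigr => o' /eqP e.
  by rewrite big_pred1_eq /p1 /= (KE o o' w e).
rewrite !entropyE /CK -opprD; congr (- _).
rewrite (sum_prod predT) [in RHS](sum_prod predT) /= -big_split /=; apply: eq_bigr => o _.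
rewrite (eq_bigr (fun w => p o * ln (law p F (F o)) * Ker o w + p1 (o, w) * ln (Ker o w))).
  by rewrite big_split /= -big_distrr /= Ker_sum mulr1.
move=> w _; rewrite /pairRV /= LE.
have [e|nz] := eqVneq (p1 (o, w)) 0.
  rewrite e !mul0r addr0; move: e; rewrite /p1 /= mulrAC => ->; by rewrite mul0r.
have [po Ko] : p o != 0 /\ Ker o w != 0.
  by move: nz; rewrite /p1 /= mulf_eq0 negb_or => /andP.
rewrite lnM ?posrE; last exact: law_gt0.
  by rewrite mulrDr addrC /p1 /= mulrAC.
by rewrite lt_neqAle eq_sym Ko Ker_ge0.
Qed.

End FRL.
Section Mix.
Variables (R : realType) (O : finType) (p : O -> R) (q : R).
Hypotheses (pp : is_pmf p) (q0 : 0 <= q) (q1 : q <= 1).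
Definition qb (b : bool) : R := if b then q else 1 - q.
Definition p2 (x : bool * O) : R := qb x.1 * p x.2.
Definition Hq : R := - (q * ln q + (1 - q) * ln (1 - q)).

Let p0 : forall w, 0 <= p w. Proof. by case: pp. Qed.
Let ps : \sum_w p w = 1. Proof. by case: pp. Qed.

Lemma qb_ge0 b : 0 <= qb b. Proof. by rewrite /qb; case: b => //; rewrite subr_ge0. Qed.

Lemma sum_bo (G : bool * O -> R) :
  \sum_x G x = \sum_o G (true, o) + \sum_o G (false, o).
Proof. by rewrite (sum_prod predT) big_bool. Qed.

Lemma p2_pmf : is_pmf p2.
Proof.
split; first by move=> [b o]; rewrite /p2 mulr_ge0 ?qb_ge0.
rewrite sum_bo /p2 /qb /= -!big_distrr /= ps; ring.
Qed.

Lemma law_p2_snd (T : finType) (F : O -> T) t : law p2 (fun x => F x.2) t = law p F t.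
Proof.
rewrite /law big_mkcond sum_bo /= -big_split /= [RHS]big_mkcond; apply: eq_bigr => o _.
by rewrite /p2 /qb /=; case: (F o == t); rewrite ?addr0 //= -mulrDl; lra.
Qed.

Lemma expect_p2 (H : bool * O -> R) :
  expect p2 H = q * expect p (fun o => H (true, o)) + (1 - q) * expect p (fun o => H (false, o)).
Proof.
by rewrite /expect sum_bo !big_distrr /=; congr (_ + _); apply: eq_bigr => o _; rewrite /p2 /= mulrA.
Qed.

Lemma law_p2_pair (T : finType) (G : bool * O -> T) b t :
  law p2 (fun x => (x.1, G x)) (b, t) = qb b * law p (fun o => G (b, o)) t.
Proof.
rewrite /law big_mkcond sum_bo /= big_distrr /= [in RHS]big_mkcond /=.
case: b => /=.
  rewrite [X in _ + X]big1 ?addr0; last by move=> o _; rewrite ?xpair_eqE.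
  by apply: eq_bigr => o _; rewrite ?xpair_eqE ?eqxx /=; case: ifP; rewrite ?mulr0.
rewrite big1 ?add0r; last by move=> o _; rewrite ?xpair_eqE.
by apply: eq_bigr => o _; rewrite ?xpair_eqE ?eqxx /=; case: ifP; rewrite ?mulr0.
Qed.

Lemma H_mix (T : finType) (F : bool -> O -> T) :
  entropy p2 (fun x => (x.1, F x.1 x.2)) = Hq + q * entropy p (F true) + (1 - q) * entropy p (F false).
Proof.
have K : forall b, \sum_o p2 (b, o) * ln (law p2 (fun x => (x.1, F x.1 x.2)) (b, F b o))
   = qb b * ln (qb b) + qb b * \sum_o p o * ln (law p (F b) (F b o)).
  move=> b; have [e|nz] := eqVneq (qb b) 0.
    by rewrite e !mul0r add0r big1 // => o _; rewrite /p2 /= e !mul0r.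
  rewrite big_distrr /= -[X in X + _]mulr1 -ps big_distrr -big_split /=.
  apply: eq_bigr => o _; rewrite /p2 /=.
  have [->|po] := eqVneq (p o) 0; first by rewrite !(mulr0, mul0r) addr0.
  rewrite (law_p2_pair (fun x => F x.1 x.2)) /= lnM ?posrE; last exact: law_gt0.
    by rewrite mulrDr; ring.
  by rewrite lt_neqAle eq_sym nz qb_ge0.
rewrite entropyE sum_bo /= !K !entropyE /Hq /qb; ring.
Qed.

End Mix.
Ltac eqv := let w := fresh "w" in let w' := fresh "w'" in
  move=> w w' _ _; rewrite /pairRV /= ?xpair_eqE ?eqxx /=; btauto.

Section Psi.
Variable R : realType.

Lemma psi1E (O Xs T0 T1 : finType) (p : O -> R) (X : O -> Xs) (U0 : O -> T0) (U1 : O -> T1) :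
  psi_1 p X U0 U1 = mutinfo p X (pairRV U0 U1).
Proof.
rewrite /psi_1 /mutinfo /cond_entropy.
rewrite (@entropy_equiv _ _ _ _ p (pairRV (pairRV U0 U1) X) (pairRV X (pairRV U0 U1))); last by eqv.
rewrite (@entropy_equiv _ _ _ _ p (pairRV U1 U0) (pairRV U0 U1)); last by eqv.
ring.
Qed.

Lemma psi12E (O Xs T0 T1 T2 T12 : finType) (p : O -> R) (X : O -> Xs) (U0 : O -> T0)
  (U1 : O -> T1) (U2 : O -> T2) (U12 : O -> T12) :
  psi_12 p X U0 U1 U2 U12 = 2 * mutinfo p X U0 + cmutinfo p X (pairRV U1 U2) U0
     + cmutinfo p U1 U2 U0 + cmutinfo p X U12 (pairRV (pairRV U0 U1) U2).
Proof.
rewrite /psi_12 /mutinfo /cmutinfo /cond_entropy.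
rewrite (@entropy_equiv _ _ _ _ p (pairRV (pairRV (pairRV (pairRV U0 U1) U2) U12) X)
   (pairRV (pairRV X U12) (pairRV (pairRV U0 U1) U2))); last by eqv.
rewrite (@entropy_equiv _ _ _ _ p (pairRV (pairRV U1 U2) U0) (pairRV (pairRV U0 U1) U2)); last by eqv.
rewrite (@entropy_equiv _ _ _ _ p (pairRV (pairRV X (pairRV U1 U2)) U0)
   (pairRV X (pairRV (pairRV U0 U1) U2))); last by eqv.
rewrite (@entropy_equiv _ _ _ _ p (pairRV U12 (pairRV (pairRV U0 U1) U2))
   (pairRV (pairRV (pairRV U0 U1) U2) U12)); last by eqv.
ring.
Qed.
End Psi.
Lemma cmut_const (R : realType) (O A C : finType) (p : O -> R) (f : O -> A) (h : O -> C) :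
  cmutinfo p f (fun _ => tt) h = 0.
Proof.
rewrite /cmutinfo.
rewrite (@entropy_equiv _ _ _ _ p (pairRV (fun _ => tt) h) h); last by eqv.
rewrite (@entropy_equiv _ _ _ _ p (pairRV (pairRV f (fun _ => tt)) h) (pairRV f h)); last by eqv.
ring.
Qed.

Lemma ZB_sub_VKG (R : realType) (Xs Xh : finType) (pX : Xs -> R) (d : Xs -> Xh -> R) R1 R2 D1 D2 D12 :
  RD_ZB pX d R1 R2 D1 D2 D12 -> RD_VKG pX d R1 R2 D1 D2 D12.
Proof.
case=> [O [p [X [T0 [T1 [T2 [U0 [U1 [U2 [phi1 [phi2 [phi12 [pp [hX [h1 [h2 [h12 [hD1 [hD2 hD12]]]]]]]]]]]]]]]]]]].
exists O, p, X, T0, T1, T2, unit, U0, U1, U2, (fun _ => tt), phi1, phi2, (fun a b c _ => phi12 a b c).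
do 2 (split => //).
by rewrite !psi1E psi12E cmut_const addr0.
Qed.
Section Main1.
Variables (R : realType) (Xs O T0 T1 T2 T12 : finType) (p : O -> R) (X : O -> Xs)
  (U0 : O -> T0) (U1 : O -> T1) (U2 : O -> T2) (U12 : O -> T12) (z0 : T12).
Hypothesis pp : is_pmf p.

Definition Ym := pairRV (pairRV U0 U1) U2.
Definition P1 := p1 p Ym U12 z0.
Definition X1 (x : O * {ffun ((T0 * T1) * T2)%type -> T12}) := X x.1.
Definition A0 (x : O * {ffun ((T0 * T1) * T2)%type -> T12}) := U0 x.1.
Definition A1 (x : O * {ffun ((T0 * T1) * T2)%type -> T12}) := U1 x.1.
Definition A2 (x : O * {ffun ((T0 * T1) * T2)%type -> T12}) := U2 x.1.
Definition Y1 (x : O * {ffun ((T0 * T1) * T2)%type -> T12}) := Ym x.1.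
Definition Wv (x : O * {ffun ((T0 * T1) * T2)%type -> T12}) := x.2.

Lemma pp1 : is_pmf P1.
Proof. exact: p1_pmf. Qed.

Lemma lift (T : finType) (F : O -> T) : entropy P1 (fun x => F x.1) = entropy p F.
Proof. by apply: entropy_law => t; exact: law_p1_fst. Qed.

Lemma supp1 x : P1 x != 0 -> x.2 (Ym x.1) = U12 x.1.
Proof.
rewrite /P1 /p1 mulf_eq0 negb_or => /andP[_ nz]; exact: Ker_supp nz.
Qed.

Let HX := entropy p X.
Let HU0 := entropy p U0.
Let HXU0 := entropy p (pairRV X U0).
Let HU0U1 := entropy p (pairRV U0 U1).
Let HU0U2 := entropy p (pairRV U0 U2).
Let HXU0U1 := entropy p (pairRV X (pairRV U0 U1)).
Let HXU0U2 := entropy p (pairRV X (pairRV U0 U2)).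
Let HY := entropy p Ym.
Let HXY := entropy p (pairRV X Ym).
Let HYZ := entropy p (pairRV Ym U12).
Let HXYZ := entropy p (pairRV (pairRV X Ym) U12).
Let HW := entropy P1 Wv.
Let U01W := entropy P1 (pairRV (pairRV A0 A1) Wv).
Let U02W := entropy P1 (pairRV (pairRV A0 A2) Wv).
Let XU01W := entropy P1 (pairRV (pairRV X1 (pairRV A0 A1)) Wv).
Let XU02W := entropy P1 (pairRV (pairRV X1 (pairRV A0 A2)) Wv).
Let Y1W := entropy P1 (pairRV Y1 Wv).
Let XY1W := entropy P1 (pairRV (pairRV X1 Y1) Wv).

Lemma c_E : cmutinfo p X U12 Ym = HXY + HW - XY1W.
Proof.
have p1' := pp1.
have ind : Y1W = HY + HW.
  rewrite /Y1W /HY /HW (H_indep Ym U12 z0 pp) -/P1; congr (_ + _); exact: lift.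
have k1 : XY1W = HXYZ + CK p Ym U12 z0.
  rewrite /XY1W /HXYZ -(H_ker z0 pp (F := pairRV (pairRV X Ym) U12)); last first.
    by move=> o o' e; split; [move: e => /(congr1 (fun t => t.1.2)) | move: e => /(congr1 snd)].
  apply: entropy_equiv => x x' nx nx'.
  rewrite /pairRV /X1 /Y1 /Wv /= !xpair_eqE -(supp1 nx) -(supp1 nx').
  case E: (x.2 == x'.2); rewrite ?andbF ?andbT //; move/eqP: E => ->.
  apply/idP/idP => [h|/andP[] //]; rewrite h /=.
  move: h => /and3P[_ /andP[/eqP e0 /eqP e1] /eqP e2].
  by rewrite /Ym /pairRV e0 e1 e2 eqxx.
have k2 : Y1W = HYZ + CK p Ym U12 z0.
  rewrite /Y1W /HYZ -(H_ker z0 pp (F := pairRV Ym U12)); last first.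
    by move=> o o' e; split; [move: e => /(congr1 fst) | move: e => /(congr1 snd)].
  apply: entropy_equiv => x x' nx nx'.
  rewrite /pairRV /Y1 /Wv /= !xpair_eqE -(supp1 nx) -(supp1 nx').
  case E: (x.2 == x'.2); rewrite ?andbF ?andbT //; move/eqP: E => ->.
  apply/idP/idP => [h|/andP[] //]; rewrite h /=.
  move: h => /andP[/andP[/eqP e0 /eqP e1] /eqP e2].
  by rewrite /Ym /pairRV e0 e1 e2 eqxx.
rewrite /cmutinfo.
rewrite (@entropy_equiv _ _ _ _ p (pairRV U12 Ym) (pairRV Ym U12)); last by eqv.
rewrite (@entropy_equiv _ _ _ _ p (pairRV (pairRV X U12) Ym) (pairRV (pairRV X Ym) U12)); last by eqv.
rewrite -/HYZ -/HXYZ -/HXY -/HY.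
lra.
Qed.

Ltac eqv2 := let w := fresh "w" in let w' := fresh "w'" in
  move=> w w' _ _; rewrite /pairRV /X1 /A0 /A1 /A2 /Y1 /Ym /Wv /= ?xpair_eqE ?eqxx /=; btauto.

Lemma N1 : 0 <= HW + HU0U1 - U01W.
Proof.
have := mutinfo_ge0 Wv (pairRV A0 A1) pp1; rewrite /mutinfo.
have -> : entropy P1 (pairRV A0 A1) = HU0U1 by exact: lift.
rewrite (@entropy_equiv _ _ _ _ P1 (pairRV Wv (pairRV A0 A1)) (pairRV (pairRV A0 A1) Wv)) //.
by eqv2.
Qed.

Lemma N1' : 0 <= HW + HU0U2 - U02W.
Proof.
have := mutinfo_ge0 Wv (pairRV A0 A2) pp1; rewrite /mutinfo.
have -> : entropy P1 (pairRV A0 A2) = HU0U2 by exact: lift.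
rewrite (@entropy_equiv _ _ _ _ P1 (pairRV Wv (pairRV A0 A2)) (pairRV (pairRV A0 A2) Wv)) //.
by eqv2.
Qed.

Lemma N2 : 0 <= XU01W + HXY - XY1W - HXU0U1.
Proof.
have := cmutinfo_ge0 Wv A2 (pairRV X1 (pairRV A0 A1)) pp1; rewrite /cmutinfo.
have -> : entropy P1 (pairRV X1 (pairRV A0 A1)) = HXU0U1 by exact: lift.
rewrite (@entropy_equiv _ _ _ _ P1 (pairRV Wv (pairRV X1 (pairRV A0 A1))) (pairRV (pairRV X1 (pairRV A0 A1)) Wv)); last by eqv2.
rewrite (@entropy_equiv _ _ _ _ P1 (pairRV A2 (pairRV X1 (pairRV A0 A1))) (pairRV X1 Y1)); last by eqv2.
rewrite (@entropy_equiv _ _ _ _ P1 (pairRV (pairRV Wv A2) (pairRV X1 (pairRV A0 A1))) (pairRV (pairRV X1 Y1) Wv)); last by eqv2.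
have -> : entropy P1 (pairRV X1 Y1) = HXY by exact: lift.
by [].
Qed.

Lemma N2' : 0 <= XU02W + HXY - XY1W - HXU0U2.
Proof.
have := cmutinfo_ge0 Wv A1 (pairRV X1 (pairRV A0 A2)) pp1; rewrite /cmutinfo.
have -> : entropy P1 (pairRV X1 (pairRV A0 A2)) = HXU0U2 by exact: lift.
rewrite (@entropy_equiv _ _ _ _ P1 (pairRV Wv (pairRV X1 (pairRV A0 A2))) (pairRV (pairRV X1 (pairRV A0 A2)) Wv)); last by eqv2.
rewrite (@entropy_equiv _ _ _ _ P1 (pairRV A1 (pairRV X1 (pairRV A0 A2))) (pairRV X1 Y1)); last by eqv2.
rewrite (@entropy_equiv _ _ _ _ P1 (pairRV (pairRV Wv A1) (pairRV X1 (pairRV A0 A2))) (pairRV (pairRV X1 Y1) Wv)); last by eqv2.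
have -> : entropy P1 (pairRV X1 Y1) = HXY by exact: lift.
by [].
Qed.

Lemma s_E : 2 * mutinfo p X U0 + cmutinfo p X (pairRV U1 U2) U0 + cmutinfo p U1 U2 U0
   = 2 * HX - HXU0 + HU0U1 + HU0U2 - HXY.
Proof.
rewrite /mutinfo /cmutinfo.
rewrite (@entropy_equiv _ _ _ _ p (pairRV (pairRV U1 U2) U0) Ym); last by eqv2.
rewrite (@entropy_equiv _ _ _ _ p (pairRV (pairRV X (pairRV U1 U2)) U0) (pairRV X Ym)); last by eqv2.
rewrite (@entropy_equiv _ _ _ _ p (pairRV U1 U0) (pairRV U0 U1)); last by eqv2.
rewrite (@entropy_equiv _ _ _ _ p (pairRV U2 U0) (pairRV U0 U2)); last by eqv2.
rewrite -/HX -/HU0 -/HXU0 -/HU0U1 -/HU0U2 -/HXY -/HY; ring.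
Qed.

Lemma sa : HXU0 + HXY <= HXU0U1 + HXU0U2.
Proof.
have := cmutinfo_ge0 U1 U2 (pairRV X U0) pp; rewrite /cmutinfo.
rewrite (@entropy_equiv _ _ _ _ p (pairRV U1 (pairRV X U0)) (pairRV X (pairRV U0 U1))); last by eqv2.
rewrite (@entropy_equiv _ _ _ _ p (pairRV U2 (pairRV X U0)) (pairRV X (pairRV U0 U2))); last by eqv2.
rewrite (@entropy_equiv _ _ _ _ p (pairRV (pairRV U1 U2) (pairRV X U0)) (pairRV X Ym)); last by eqv2.
rewrite -/HXU0 -/HXY -/HXU0U1 -/HXU0U2; lra.
Qed.

End Main1.
Lemma mix_eq (R : realType) (O1 T T' Tt Tf : finType) (P : O1 -> R) (q : R)
  (pp : is_pmf P) (q0 : 0 <= q) (q1 : q <= 1)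
  (E : bool * O1 -> T) (F : bool -> O1 -> T') (Gt : O1 -> Tt) (Gf : O1 -> Tf) :
  (forall x x', p2 P q x != 0 -> p2 P q x' != 0 ->
      (E x == E x') = ((x.1, F x.1 x.2) == (x'.1, F x'.1 x'.2))) ->
  entropy P (F true) = entropy P Gt -> entropy P (F false) = entropy P Gf ->
  entropy (p2 P q) E = Hq q + q * entropy P Gt + (1 - q) * entropy P Gf.
Proof.
move=> hE ht hf.
rewrite (@entropy_equiv _ _ _ _ _ E (fun x => (x.1, F x.1 x.2))) //.
by rewrite (H_mix pp q0 q1 F) ht hf.
Qed.

Section ZBv.
Variables (Xs O T0 T1 T2 T12 : finType) (X : O -> Xs) (U0 : O -> T0) (U1 : O -> T1) (U2 : O -> T2).
Definition X2 (x : bool * (O * {ffun ((T0 * T1) * T2)%type -> T12})) := X x.2.1.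
Definition V0 (x : bool * (O * {ffun ((T0 * T1) * T2)%type -> T12})) := (x.1, U0 x.2.1).
Definition V1 (x : bool * (O * {ffun ((T0 * T1) * T2)%type -> T12})) :=
  (U1 x.2.1, if x.1 then Some x.2.2 else None).
Definition V2 (x : bool * (O * {ffun ((T0 * T1) * T2)%type -> T12})) :=
  (U2 x.2.1, if x.1 then None else Some x.2.2).
End ZBv.

Lemma some_eq (T : eqType) (x y : T) : (Some x == Some y) = (x == y).
Proof. by apply/eqP/eqP => [[]|->]. Qed.

Ltac eqv3 := let w := fresh "w" in let w' := fresh "w'" in
  move=> w w' _ _; rewrite /pairRV /X1 /A0 /A1 /A2 /Y1 /Ym /Wv /X2 /V0 /V1 /V2 /= ?xpair_eqE ?some_eq ?eqxx /=; btauto.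
Ltac eqv4 := let o := fresh "o" in let o' := fresh "o'" in
  move=> [[] o] [[] o'] _ _;
  rewrite /pairRV /X1 /A0 /A1 /A2 /Y1 /Ym /Wv /X2 /V0 /V1 /V2 /= ?xpair_eqE ?some_eq ?eqxx /=; btauto.
Ltac mixt := [> eqv4 | apply: entropy_equiv; eqv3 | apply: entropy_equiv; eqv3].

Lemma VKG_sub_ZB (R : realType) (Xs Xh : finType) (pX : Xs -> R) (d : Xs -> Xh -> R) R1 R2 D1 D2 D12 :
  RD_VKG pX d R1 R2 D1 D2 D12 -> RD_ZB pX d R1 R2 D1 D2 D12.
Proof.
case=> [O [p [X [T0 [T1 [T2 [T12 [U0 [U1 [U2 [U12 [phi1 [phi2 [phi12 [pp [hX [h1 [h2 [h12 [hD1 [hD2 hD12]]]]]]]]]]]]]]]]]]]]].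
rewrite psi1E in h1; rewrite psi1E in h2; rewrite psi12E in h12.
have [p0 ps] := pp.
have [o0 _] : exists o : O, True.
  case: (pickP (fun _ : O => true)) => [o _|e]; first by exists o.
  by move: ps; rewrite big_pred0 // => /eqP; rewrite eq_sym oner_eq0.
pose z0 := U12 o0.
have cE := c_E X U0 U1 U2 U12 z0 pp.
have n1 := N1 U0 U1 U2 U12 z0 pp.
have n1' := N1' U0 U1 U2 U12 z0 pp.
have n2 := N2 X U0 U1 U2 U12 z0 pp.
have n2' := N2' X U0 U1 U2 U12 z0 pp.
have sE := s_E p X U0 U1 U2.
have sa' := sa X U0 U1 U2 pp.
have c0 := cmutinfo_ge0 X U12 (Ym U0 U1 U2) pp.
change (pairRV (pairRV U0 U1) U2) with (Ym U0 U1 U2) in h12.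
rewrite sE in h12.
move: h1 h2; rewrite /mutinfo => h1 h2.
set cc := cmutinfo p X U12 (Ym U0 U1 U2) in cE c0 h12.
set x := R1 - (entropy p X + entropy p (pairRV U0 U1) - entropy p (pairRV X (pairRV U0 U1))).
set y := R2 - (entropy p X + entropy p (pairRV U0 U2) - entropy p (pairRV X (pairRV U0 U2))).
have x0 : 0 <= x by rewrite /x; lra.
have y0 : 0 <= y by rewrite /y; lra.
have hxy : cc <= x + y by rewrite /x /y; lra.
pose q := if cc <= x then 1 else x / cc.
have [q0 [q1 [hq1 hq2]]] : 0 <= q /\ q <= 1 /\ q * cc <= x /\ (1 - q) * cc <= y.
  rewrite /q; case: ifP => hc; first by rewrite mul1r subrr mul0r; lra.
  have ltc : x < cc by rewrite ltNge hc.
  have cpos : 0 < cc by lra.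
  rewrite divr_ge0 ?ler_pdivrMr // ?mul1r ?divfK //; last by rewrite gt_eqF.
  rewrite mulrBl mul1r divfK; last by rewrite gt_eqF.
  by repeat split; lra.
have pP : is_pmf (P1 p U0 U1 U2 U12 z0) := pp1 U0 U1 U2 U12 z0 pp.
have m1 : entropy (p2 (P1 p U0 U1 U2 U12 z0) q) (pairRV (V0 U0) (V1 U1)) =
   Hq q + q * entropy (P1 p U0 U1 U2 U12 z0) (pairRV (pairRV (A0 U0) (A1 U1)) (@Wv O T0 T1 T2 T12)) + (1 - q) * entropy (P1 p U0 U1 U2 U12 z0) (pairRV (A0 U0) (A1 U1)).
  apply: (mix_eq pP q0 q1 (F := fun b (o : (O * {ffun ((T0 * T1) * T2)%type -> T12})) => (U0 o.1, (U1 o.1, (if b then Some o.2 else None))))); mixt.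
have m9 : entropy (p2 (P1 p U0 U1 U2 U12 z0) q) (pairRV (V1 U1) (V0 U0)) =
   Hq q + q * entropy (P1 p U0 U1 U2 U12 z0) (pairRV (pairRV (A0 U0) (A1 U1)) (@Wv O T0 T1 T2 T12)) + (1 - q) * entropy (P1 p U0 U1 U2 U12 z0) (pairRV (A0 U0) (A1 U1)).
  apply: (mix_eq pP q0 q1 (F := fun b (o : (O * {ffun ((T0 * T1) * T2)%type -> T12})) => (U0 o.1, (U1 o.1, (if b then Some o.2 else None))))); mixt.
have m2 : entropy (p2 (P1 p U0 U1 U2 U12 z0) q) (pairRV (X2 X) (pairRV (V0 U0) (V1 U1))) =
   Hq q + q * entropy (P1 p U0 U1 U2 U12 z0) (pairRV (pairRV (X1 X) (pairRV (A0 U0) (A1 U1))) (@Wv O T0 T1 T2 T12)) + (1 - q) * entropy (P1 p U0 U1 U2 U12 z0) (pairRV (X1 X) (pairRV (A0 U0) (A1 U1))).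
  apply: (mix_eq pP q0 q1 (F := fun b (o : (O * {ffun ((T0 * T1) * T2)%type -> T12})) => (X o.1, (U0 o.1, (U1 o.1, (if b then Some o.2 else None)))))); mixt.
have m3 : entropy (p2 (P1 p U0 U1 U2 U12 z0) q) (pairRV (V0 U0) (V2 U2)) =
   Hq q + q * entropy (P1 p U0 U1 U2 U12 z0) (pairRV (A0 U0) (A2 U2)) + (1 - q) * entropy (P1 p U0 U1 U2 U12 z0) (pairRV (pairRV (A0 U0) (A2 U2)) (@Wv O T0 T1 T2 T12)).
  apply: (mix_eq pP q0 q1 (F := fun b (o : (O * {ffun ((T0 * T1) * T2)%type -> T12})) => (U0 o.1, (U2 o.1, (if b then None else Some o.2))))); mixt.
have m10 : entropy (p2 (P1 p U0 U1 U2 U12 z0) q) (pairRV (V2 U2) (V0 U0)) =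
   Hq q + q * entropy (P1 p U0 U1 U2 U12 z0) (pairRV (A0 U0) (A2 U2)) + (1 - q) * entropy (P1 p U0 U1 U2 U12 z0) (pairRV (pairRV (A0 U0) (A2 U2)) (@Wv O T0 T1 T2 T12)).
  apply: (mix_eq pP q0 q1 (F := fun b (o : (O * {ffun ((T0 * T1) * T2)%type -> T12})) => (U0 o.1, (U2 o.1, (if b then None else Some o.2))))); mixt.
have m4 : entropy (p2 (P1 p U0 U1 U2 U12 z0) q) (pairRV (X2 X) (pairRV (V0 U0) (V2 U2))) =
   Hq q + q * entropy (P1 p U0 U1 U2 U12 z0) (pairRV (X1 X) (pairRV (A0 U0) (A2 U2))) + (1 - q) * entropy (P1 p U0 U1 U2 U12 z0) (pairRV (pairRV (X1 X) (pairRV (A0 U0) (A2 U2))) (@Wv O T0 T1 T2 T12)).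
  apply: (mix_eq pP q0 q1 (F := fun b (o : (O * {ffun ((T0 * T1) * T2)%type -> T12})) => (X o.1, (U0 o.1, (U2 o.1, (if b then None else Some o.2)))))); mixt.
have m5 : entropy (p2 (P1 p U0 U1 U2 U12 z0) q) (V0 U0) =
   Hq q + q * entropy (P1 p U0 U1 U2 U12 z0) (A0 U0) + (1 - q) * entropy (P1 p U0 U1 U2 U12 z0) (A0 U0).
  apply: (mix_eq pP q0 q1 (F := fun b (o : (O * {ffun ((T0 * T1) * T2)%type -> T12})) => U0 o.1)); mixt.
have m6 : entropy (p2 (P1 p U0 U1 U2 U12 z0) q) (pairRV (X2 X) (V0 U0)) =
   Hq q + q * entropy (P1 p U0 U1 U2 U12 z0) (pairRV (X1 X) (A0 U0)) + (1 - q) * entropy (P1 p U0 U1 U2 U12 z0) (pairRV (X1 X) (A0 U0)).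
  apply: (mix_eq pP q0 q1 (F := fun b (o : (O * {ffun ((T0 * T1) * T2)%type -> T12})) => (X o.1, U0 o.1))); mixt.
have m7 : entropy (p2 (P1 p U0 U1 U2 U12 z0) q) (pairRV (pairRV (V1 U1) (V2 U2)) (V0 U0)) =
   Hq q + q * entropy (P1 p U0 U1 U2 U12 z0) (pairRV (Y1 U0 U1 U2) (@Wv O T0 T1 T2 T12)) + (1 - q) * entropy (P1 p U0 U1 U2 U12 z0) (pairRV (Y1 U0 U1 U2) (@Wv O T0 T1 T2 T12)).
  apply: (mix_eq pP q0 q1 (F := fun b (o : (O * {ffun ((T0 * T1) * T2)%type -> T12})) => (U0 o.1, ((U1 o.1, (if b then Some o.2 else None)), (U2 o.1, (if b then None else Some o.2)))))); mixt.
have m8 : entropy (p2 (P1 p U0 U1 U2 U12 z0) q) (pairRV (pairRV (X2 X) (pairRV (V1 U1) (V2 U2))) (V0 U0)) =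
   Hq q + q * entropy (P1 p U0 U1 U2 U12 z0) (pairRV (pairRV (X1 X) (Y1 U0 U1 U2)) (@Wv O T0 T1 T2 T12)) + (1 - q) * entropy (P1 p U0 U1 U2 U12 z0) (pairRV (pairRV (X1 X) (Y1 U0 U1 U2)) (@Wv O T0 T1 T2 T12)).
  apply: (mix_eq pP q0 q1 (F := fun b (o : (O * {ffun ((T0 * T1) * T2)%type -> T12})) => (X o.1, (U0 o.1, ((U1 o.1, (if b then Some o.2 else None)), (U2 o.1, (if b then None else Some o.2))))))); mixt.
have lA : entropy (P1 p U0 U1 U2 U12 z0) (pairRV (A0 U0) (A1 U1)) = entropy p (pairRV U0 U1) by exact: lift.
have lB : entropy (P1 p U0 U1 U2 U12 z0) (pairRV (X1 X) (pairRV (A0 U0) (A1 U1))) = entropy p (pairRV X (pairRV U0 U1)) by exact: lift.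
have lC : entropy (P1 p U0 U1 U2 U12 z0) (pairRV (A0 U0) (A2 U2)) = entropy p (pairRV U0 U2) by exact: lift.
have lD : entropy (P1 p U0 U1 U2 U12 z0) (pairRV (X1 X) (pairRV (A0 U0) (A2 U2))) = entropy p (pairRV X (pairRV U0 U2)) by exact: lift.
have lE : entropy (P1 p U0 U1 U2 U12 z0) (A0 U0) = entropy p (U0) by exact: lift.
have lF : entropy (P1 p U0 U1 U2 U12 z0) (pairRV (X1 X) (A0 U0)) = entropy p (pairRV X U0) by exact: lift.
have m0 : entropy (p2 (P1 p U0 U1 U2 U12 z0) q) (X2 X) = entropy p X.
  apply: entropy_law => t; rewrite -(law_p1_fst p (Ym U0 U1 U2) U12 z0 X t).
  exact: (law_p2_snd _ q (fun o : (O * {ffun ((T0 * T1) * T2)%type -> T12}) => X o.1) t).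
have B1 : entropy (P1 p U0 U1 U2 U12 z0) (pairRV (pairRV (A0 U0) (A1 U1)) (@Wv O T0 T1 T2 T12))
   - entropy (P1 p U0 U1 U2 U12 z0) (pairRV (pairRV (X1 X) (pairRV (A0 U0) (A1 U1))) (@Wv O T0 T1 T2 T12))
   - entropy p (pairRV U0 U1) + entropy p (pairRV X (pairRV U0 U1)) <= cc by lra.
have B2 : entropy (P1 p U0 U1 U2 U12 z0) (pairRV (pairRV (A0 U0) (A2 U2)) (@Wv O T0 T1 T2 T12))
   - entropy (P1 p U0 U1 U2 U12 z0) (pairRV (pairRV (X1 X) (pairRV (A0 U0) (A2 U2))) (@Wv O T0 T1 T2 T12))
   - entropy p (pairRV U0 U2) + entropy p (pairRV X (pairRV U0 U2)) <= cc by lra.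
have pr1 := ler_wpM2l q0 B1.
have q0' : 0 <= 1 - q by lra.
have pr2 := ler_wpM2l q0' B2.
have pr3 := mulr_ge0 q0 n1.
have pr4 := mulr_ge0 q0' n1'.
exists (bool * (O * {ffun ((T0 * T1) * T2)%type -> T12}))%type, (p2 (P1 p U0 U1 U2 U12 z0) q), (X2 X), (bool * T0)%type,
  (T1 * option {ffun ((T0 * T1) * T2)%type -> T12})%type, (T2 * option {ffun ((T0 * T1) * T2)%type -> T12})%type, (V0 U0), (V1 U1), (V2 U2).
exists (fun v0 v1 => phi1 v0.2 v1.1), (fun v0 v2 => phi2 v0.2 v2.1),
  (fun (v0 : bool * T0) (v1 : T1 * option {ffun ((T0 * T1) * T2)%type -> T12}) (v2 : T2 * option {ffun ((T0 * T1) * T2)%type -> T12}) => phi12 v0.2 v1.1 v2.1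
     (match (if v0.1 then v1.2 else v2.2) with Some w => w ((v0.2, v1.1), v2.1) | None => z0 end)).
split; first exact: p2_pmf pP q0 q1.
split.
  move=> t; rewrite -hX -(law_p1_fst p (Ym U0 U1 U2) U12 z0 X t).
  exact: (law_p2_snd _ q (fun o : O * {ffun ((T0 * T1) * T2)%type -> T12} => X o.1) t).
split; first by rewrite /mutinfo m0 m1 m2 lA lB; rewrite /x in hq1; lra.
split; first by rewrite /mutinfo m0 m3 m4 lC lD; rewrite /y in hq2; lra.
split; first by rewrite /mutinfo /cmutinfo m0 m5 m6 m7 m8 m9 m10 lA lC lE lF; lra.
have e1 : forall b, expect (p1 p (Ym U0 U1 U2) U12 z0)
     (fun o => d (X2 X (b, o)) (phi1 (V0 U0 (b, o)).2 (V1 U1 (b, o)).1))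
   = expect p (fun o => d (X o) (phi1 (U0 o) (U1 o))) by move=> b; apply: expect_p1.
have e2 : forall b, expect (p1 p (Ym U0 U1 U2) U12 z0)
     (fun o => d (X2 X (b, o)) (phi2 (V0 U0 (b, o)).2 (V2 U2 (b, o)).1))
   = expect p (fun o => d (X o) (phi2 (U0 o) (U2 o))) by move=> b; apply: expect_p1.
split; first by rewrite expect_p2 /P1 !e1; lra.
split; first by rewrite expect_p2 /P1 !e2; lra.
have e3 : forall b, expect (p1 p (Ym U0 U1 U2) U12 z0)
     (fun o => d (X2 X (b, o)) (phi12 (V0 U0 (b, o)).2 (V1 U1 (b, o)).1 (V2 U2 (b, o)).1
        (match (if (V0 U0 (b, o)).1 then (V1 U1 (b, o)).2 else (V2 U2 (b, o)).2) with
         | Some w => w (((V0 U0 (b, o)).2, (V1 U1 (b, o)).1), (V2 U2 (b, o)).1) | None => z0 end)))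
   = expect p (fun o => d (X o) (phi12 (U0 o) (U1 o) (U2 o) (U12 o))).
  move=> b; apply: expect_p1 => o w; rewrite mulf_eq0 negb_or => /andP[_ /Ker_supp] e.
  by case: b; rewrite /V0 /V1 /V2 /X2 /= -e.
by rewrite expect_p2 /P1 !e3; lra.
Qed.

Unset Implicit Arguments.
Theorem corollary2 (R : realType) (Xs Xh : finType) (pX : Xs -> R)
  (d : Xs -> Xh -> R)
  (pX_ge0 : forall x, 0 <= pX x) (pX_sum1 : \sum_(x : Xs) pX x = 1)
  (d_ge0 : forall x y, 0 <= d x y) :
  forall R1 R2 D1 D2 D12 : R,
    RD_ZB pX d R1 R2 D1 D2 D12 <-> RD_VKG pX d R1 R2 D1 D2 D12.
Proof.
move=> R1 R2 D1 D2 D12; split; [exact: ZB_sub_VKG | exact: VKG_sub_ZB].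
Qed.
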